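(* Let $N\ge2$. The matrix $D^\ddagger$ is invertible, and its inverse $E=(D^\ddagger)^{-1}$ is given by $$E_{ij}=\omega_NM_j(1)+\int_1^{\tau_i}M_j(\tau)\,d\tau\quad(1\le i<N,\ 1\le j<N),$$ $$E_{iN}=-\omega_N\quad(1\le i\le N),\qquad E_{Nj}=\omega_NM_j(1)\quad(1\le j<N),$$ where $M_j(\tau)=\prod_{i=1,i\ne j}^{N-1}\frac{\tau-\tau_i}{\tau_j-\tau_i}$, $1\le j\le N-1$, is the Lagrange basis for the points $\tau_1,\dots,\tau_{N-1}$.
   Context: Let $-1<\tau_1<\dots<\tau_N=1$ and $\omega_1,\dots,\omega_N>0$ be the nodes and weights of the $N$-point Gauss–Radau quadrature rule on $[-1,1]$ with fixed node $+1$ (exact for polynomials of degree $\le 2N-2$). Set $\tau_0=-1$. For $0\le j\le N$ let $L_j(\tau)=\prod_{i=0,i\ne j}^{N}\frac{\tau-\tau_i}{\tau_j-\tau_i}$ and let $D$ be the $N\times(N+1)$ matrix $D_{ij}=L_j'(\tau_i)$, $1\le i\le N$, $0\le j\le N$. Let $D^\ddagger$ be the $N\times N$ matrix $D^\ddagger_{ij}=-(\omega_j/\omega_i)D_{ji}$, $1\le i,j\le N$. *)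

(* Defs.v *)
From HB Require Import structures.
From mathcomp Require Import all_boot all_order all_algebra.
Set Implicit Arguments. Unset Strict Implicit. Unset Printing Implicit Defensive.
Import Order.TTheory GRing.Theory Num.Theory.
Local Open Scope ring_scope.

Section Defs.
Variable R : realFieldType.

Definition lagr (tau : nat -> R) (S : seq nat) (j : nat) : {poly R} :=
  \prod_(i <- S | i != j) (('X - (tau i)%:P) * ((tau j - tau i)^-1)%:P).

Definition prim (p : {poly R}) : {poly R} :=
  \poly_(i < (size p).+1) (if i is k.+1 then p`_k / k.+1%:R else 0).

Definition pint (p : {poly R}) (a b : R) : R := (prim p).[b] - (prim p).[a].

Definition LL (N : nat) (tau : nat -> R) (j : nat) := lagr tau (iota 0 N.+1) j.
Definition MM (N : nat) (tau : nat -> R) (j : nat) := lagr tau (iota 1 N.-1) j.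

Definition Dmat (N : nat) (tau : nat -> R) (i j : nat) : R :=
  (LL N tau j)^`().[tau i].

(* D^ddagger, with matrix index i : 'I_N standing for i+1 *)
Definition Dddag (N : nat) (tau w : nat -> R) : 'M[R]_N :=
  \matrix_(i < N, j < N) (- (w j.+1 / w i.+1) * Dmat N tau j.+1 i.+1).

(* The claimed inverse E, with matrix index i : 'I_N standing for i+1 *)
Definition Emat (N : nat) (tau w : nat -> R) : 'M[R]_N :=
  \matrix_(i < N, j < N)
    (if j.+1 == N then - w N
     else if i.+1 == N then w N * (MM N tau j.+1).[1]
     else w N * (MM N tau j.+1).[1] + pint (MM N tau j.+1) 1 (tau i.+1)).

Definition gauss_radau (N : nat) (tau w : nat -> R) : Prop :=
  [/\ tau 0 = -1, -1 < tau 1, (forall i, (1 <= i < N)%N -> tau i < tau i.+1),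
      tau N = 1 & (forall i, (1 <= i <= N)%N -> 0 < w i)] /\
      (forall p : {poly R}, (size p <= (2 * N - 1))%N ->
         \sum_(i < N) w i.+1 * p.[tau i.+1] = pint p (-1) 1).
End Defs.

(* Main.v *)
Require Import Defs.
From HB Require Import structures.
From mathcomp Require Import all_boot all_order all_algebra.
From mathcomp Require Import zify ring lra.
Import Order.TTheory GRing.Theory Num.Theory.
Local Open Scope ring_scope.

Section H.
Variable R : realFieldType.
Implicit Types p : {poly R}.

Lemma coef_prim p k : (prim p)`_k = if k is k'.+1 then p`_k' / k'.+1%:R else 0.
Proof.
rewrite /prim coef_poly; case: k => [|k] //; case: ltnP => // H.
by rewrite nth_default ?mul0r.
Qed.

Lemma prim_deriv p : prim (p^`()) = p - (p`_0)%:P.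
Proof.
apply/polyP => k; rewrite coef_prim coefB coefC; case: k => [|k] /=.
  by rewrite subrr.
rewrite coef_deriv subr0 -[_ *+ _]mulr_natr mulfK //.
by rewrite pnatr_eq0.
Qed.

Lemma deriv_prim p : (prim p)^`() = p.
Proof.
apply/polyP => k; rewrite coef_deriv coef_prim -[_ *+ _]mulr_natr divfK //.
by rewrite pnatr_eq0.
Qed.

Lemma pint_deriv p a b : pint p^`() a b = p.[b] - p.[a].
Proof. rewrite /pint prim_deriv !hornerE; ring. Qed.

Lemma size_prim p : (size (prim p) <= (size p).+1)%N.
Proof. exact: size_poly. Qed.

Lemma size_deriv_leq p : (size p^`() <= (size p).-1)%N.
Proof.
have [->|nz] := eqVneq p 0; first by rewrite deriv0 size_poly0.
have := lt_size_deriv nz; lia.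
Qed.

Lemma count_pC1 (j : nat) (s : seq nat) :
  (count (predC1 j) s + count_mem j s)%N = size s.
Proof. elim: s => //= a s IH; case: eqP => /= _; lia. Qed.

Lemma size_lagr (tau : nat -> R) S j : (size (lagr tau S j) <= (count (predC1 j) S).+1)%N.
Proof.
rewrite /lagr; elim: S => [|a S IH]; first by rewrite big_nil size_poly1.
rewrite big_cons /=; case: eqP => [_|_] /=; first by [].
apply: leq_trans (size_polyMleq _ _) _.
have h : (size ((('X - (tau a)%:P) * ((tau j - tau a)^-1)%:P)%R) <= 2)%N.
  apply: leq_trans (size_polyMleq _ _) _.
  by rewrite size_XsubC; have := size_polyC_leq1 (tau j - tau a)^-1; rewrite addnC; case: (size _) => [|[|]].

move: IH h; set x := size (\prod_(_ <- _ | _) _ : {poly R})%R; set y := size _; clearbody x y; move: (count _ _) => c; rewrite -subn1; lia.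
Qed.

Lemma horner_lagr (tau : nat -> R) S j m : m \in S ->
  (forall i, i \in S -> i != j -> tau i != tau j) ->
  (lagr tau S j).[tau m] = (m == j)%:R.
Proof.
move=> mS inj; rewrite /lagr horner_prod; case: eqP => [->|ne].
  apply: big1_seq => i /andP [ne_ij iS].
  rewrite !hornerE divff // subr_eq0 eq_sym; exact: inj.
apply/eqP; rewrite prodf_seq_eq0; apply/hasP; exists m => //.
by rewrite (introN eqP ne) /= !hornerE subrr mul0r.
Qed.

End H.

Theorem proposition9p1 (R : realFieldType) (N : nat) (tau w : nat -> R) :
  (2 <= N)%N -> gauss_radau N tau w ->
  Dddag N tau w \in unitmx /\ invmx (Dddag N tau w) = Emat N tau w.
Proof.
move=> N2 [[t0 t1 tinc tN wpos] quad].
have tS : forall i, (i < N)%N -> tau i < tau i.+1.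
  by case=> [|i] // iN; rewrite ?t0 //; apply: tinc; lia.
have tlt : forall i k, (i < k)%N -> (k <= N)%N -> tau i < tau k.
  move=> i; elim=> [//|k IH] ik kN.
  have := tS k ltac:(lia); case: (ltngtP i k) => [ik'|//|<-//].
  by move=> h; apply: lt_trans h; apply: IH; lia.
  by move=> ki; lia.
have tinj : forall i k, (i <= N)%N -> (k <= N)%N -> i != k -> tau i != tau k.
  move=> i k iN kN; case: (ltngtP i k) => // ik _.
    by rewrite lt_eqF // tlt.
  by rewrite gt_eqF // tlt.
have wnz : forall i, (1 <= i <= N)%N -> w i != 0.
  by move=> i hi; rewrite gt_eqF // wpos.
have Lval : forall I m, (I <= N)%N -> (m <= N)%N ->
    (LL N tau I).[tau m] = (m == I)%:R.
  move=> I m IN mN; apply: horner_lagr; first by rewrite mem_iota; lia.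
  by move=> i; rewrite mem_iota => hi; apply: tinj; lia.
have Mval : forall K m, (1 <= K < N)%N -> (1 <= m < N)%N ->
    (MM N tau K).[tau m] = (m == K)%:R.
  move=> K m KN mN; apply: horner_lagr; first by rewrite mem_iota; lia.
  by move=> i; rewrite mem_iota => hi; apply: tinj; lia.
have sizeL : forall I, (I <= N)%N -> (size (LL N tau I) <= N.+1)%N.
  move=> I IN; apply: leq_trans (size_lagr _ _ _ _) _.
  have := count_pC1 I (iota 0 N.+1); rewrite count_uniq_mem ?iota_uniq //.
  by rewrite mem_iota size_iota; lia.
have sizeM : forall K, (1 <= K < N)%N -> (size (MM N tau K) <= N.-1)%N.
  move=> K KN; apply: leq_trans (size_lagr _ _ _ _) _.
  have := count_pC1 K (iota 1 N.-1); rewrite count_uniq_mem ?iota_uniq //.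
  by rewrite mem_iota size_iota; lia.
have key : Dddag N tau w *m Emat N tau w = 1%:M.
  apply/matrixP => i k; rewrite !mxE.
  under eq_bigr do rewrite !mxE.
  rewrite /Dmat.
  set L := LL N tau i.+1.
  have hi := ltn_ord i; have hk := ltn_ord k.
  have wi : w i.+1 != 0 by apply: wnz; lia.
  have L1 : L.[1] = (i.+1 == N)%:R by rewrite -{1}tN Lval // eq_sym.
  have Lm1 : L.[-1] = 0 by rewrite -{1}t0 Lval.
  have sizeL' : (size L <= N.+1)%N by apply: sizeL; lia.
  case: (eqVneq k.+1 N) => [kN|kN].
    transitivity ((w N / w i.+1) * \sum_(j < N) w j.+1 * L^`().[tau j.+1]).
      rewrite mulr_sumr; apply: eq_bigr => j _; field; exact: wi.
    rewrite quad; last first.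
      apply: leq_trans (size_deriv_leq _ _) _; lia.
    rewrite pint_deriv L1 Lm1 subr0.
    have -> : (i == k) = (i.+1 == k.+1) by []. rewrite kN.
    case: eqP => [iN|_]; last by rewrite !mulr0.
    by rewrite iN divff ?mulr1 //; apply: wnz; lia.
  set K := k.+1.
  set M := MM N tau K.
  set F := prim M + (w N * M.[1] - (prim M).[1])%:P.
  have hK : (0 < K < N)%N by move/eqP: kN; rewrite /K; lia.
  have F1 : F.[1] = w N * M.[1].
 by rewrite /F hornerD hornerC; ring.
  have sF : (size F <= N)%N.
    apply: leq_trans (size_polyD _ _) _; rewrite geq_max; apply/andP; split.
      apply: leq_trans (size_prim _ _) _; have := sizeM K hK; rewrite -/M; lia.
    apply: leq_trans (size_polyC_leq1 _) _; lia.
  transitivity (- (w i.+1)^-1 * \sum_(j<N) w j.+1 * (L^`() * F).[tau j.+1]).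
    rewrite mulr_sumr; apply: eq_bigr => j _; rewrite hornerM.
    have -> : (if j.+1 == N then w N * M.[1] else
               w N * M.[1] + pint M 1 (tau j.+1)) = F.[tau j.+1].
      rewrite /F hornerD hornerC; case: eqP => [->|_]; rewrite ?tN /pint; ring.
    field; exact: wi.
  have dLF : L^`() * F = (L * F)^`() - L * M.
    by rewrite derivM /F derivD deriv_prim derivC addr0; ring.
  rewrite (eq_bigr (fun j : 'I_N => w j.+1 * (L*F)^`().[tau j.+1] - w j.+1 * (L*M).[tau j.+1])); last first.
    by move=> j _; rewrite dLF hornerD hornerN mulrDr mulrN.
  rewrite sumrB quad; last first.
    apply: leq_trans (size_deriv_leq _ _) _.
    have := size_polyMleq L F; move: (size (L * F)) (size L) (size F) sizeL' sF.
    move=> a b c; rewrite -subn1 -subn1; lia.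
  rewrite pint_deriv !hornerM L1 Lm1 F1.
  rewrite (bigD1 i) //= big1 ?addr0; last first.
    move=> j ji; have hj := ltn_ord j; rewrite hornerM Lval; [|lia|lia].
    have -> : (j.+1 == i.+1) = false by exact: negbTE ji.
    by rewrite mul0r mulr0.
  rewrite hornerM /L Lval ?eqxx; [|lia|lia].
  case: (eqVneq i.+1 N) => [iN|iN].
    have -> : (i == k) = false.
      by apply/eqP => ik; move: kN; rewrite -ik iN eqxx.
    rewrite iN tN /=; ring.
  rewrite Mval; [|lia|lia].
  change (i.+1 == K) with (i == k).
  rewrite /=; set c := ((i == k)%:R : R); field; exact: wi.
have [uD _] := mulmx1_unit key; split => //.
by rewrite -[RHS](mulKmx uD) key mulmx1.
Qed.
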